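(* Let $t$ be a positive integer, $s\ge 2$, and let $G=K(n_1,\dots,n_s)$ be a complete $s$-partite graph with parts $V_1,\dots,V_s$, $|V_j|=n_j$. Let $f$ be a $t$-relaxed coloring of $G$. If a color $i$ appears on exactly $r\ge 2$ parts of $G$ (i.e. exactly $r$ parts contain a vertex $v$ with $f(v)=i$), then $|f^{-1}(i)|\le t+\left\lfloor \frac{t}{r-1}\right\rfloor$.
   Context: $K(n_1,\dots,n_s)$ denotes the complete $s$-partite graph whose parts have $n_1,\dots,n_s\ge 1$ vertices. A map $f$ from $V(G)$ to a finite set of colors is a $t$-relaxed coloring if every vertex $u$ has at most $t$ neighbors $v$ with $f(v)=f(u)$. $f^{-1}(i)$ is the set of vertices receiving color $i$. *)

(* Defs.v *)
From mathcomp Require Import all_boot.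
Set Implicit Arguments. Unset Strict Implicit. Unset Printing Implicit Defensive.

(* The complete s-partite graph K(n_1,...,n_s): vertex set V (a finType),
   part map [part : V -> 'I_s] (vertex v lies in part V_(part v)); every part
   is nonempty ([part] surjective), and |V_j| = n_j := #|part @^-1 j|. *)
Definition kpart_adj (V : finType) (s : nat) (part : V -> 'I_s) : rel V :=
  fun u v => part u != part v.

Definition parts_nonempty (V : finType) (s : nat) (part : V -> 'I_s) : Prop :=
  forall j : 'I_s, exists v : V, part v = j.

Definition relaxed_coloring (V : finType) (C : eqType) (adj : rel V)
    (t : nat) (f : V -> C) : Prop :=
  forall u : V, #|[set v | adj u v && (f v == f u)]| <= t.

Definition color_class (V : finType) (C : eqType) (f : V -> C) (i : C) : {set V} :=
  [set v | f v == i].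

Definition parts_with_color (V : finType) (C : eqType) (s : nat)
    (part : V -> 'I_s) (f : V -> C) (i : C) : {set 'I_s} :=
  [set j | [exists v, (part v == j) && (f v == i)]].

(* Main.v *)
Require Import Defs.
From mathcomp Require Import all_boot.
From mathcomp Require Import zify.

Theorem lemma2p1 (V : finType) (C : eqType) (s t r : nat)
    (part : V -> 'I_s) (f : V -> C) (i : C) :
  0 < t -> 2 <= s -> parts_nonempty part ->
  relaxed_coloring (kpart_adj part) t f ->
  #|parts_with_color part f i| = r -> 2 <= r ->
  #|color_class f i| <= t + t %/ (r - 1).
Proof.
move=> t0 s2 _ Hcol Hr r2.
set A := color_class f i.
set P := parts_with_color part f i.
pose a (j : 'I_s) := #|A :&: [set v | part v == j]|.
have key : forall j, j \in P -> #|A| <= t + a j.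
  move=> j; rewrite inE => /existsP [u /andP [/eqP pu /eqP fu]].
  have := Hcol u.
  have -> : [set v | kpart_adj part u v && (f v == f u)] = A :\: [set v | part v == j].
    apply/setP => v; rewrite /A /color_class !inE /kpart_adj pu fu eq_sym.
    by rewrite andbC.
  rewrite -(cardsID [set v | part v == j] A) /a; lia.
have sumA : #|A| = \sum_(j in P) a j.
  rewrite -sum1_card (partition_big part (fun j => j \in P)); last first.
    move=> v; rewrite /A /color_class inE => fv.
    rewrite inE; apply/existsP; exists v; by rewrite eqxx.
  apply: eq_bigr => j _; rewrite /a -sum1_card; apply: eq_bigl => v.
  by rewrite !inE.
have : \sum_(j in P) #|A| <= \sum_(j in P) (t + a j) by apply: leq_sum.
rewrite big_split /= -sumA !sum_nat_const Hr => H.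
have H2 : (#|A| - t) * (r - 1) <= t.
  rewrite mulnBl; nia.
rewrite -(leq_divRL _ _ (_ : 0 < r - 1)) in H2; last lia.
lia.
Qed.
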